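(* For every open interval $I$ of $\mathbb{Z}^{\omega}$ there is an order-isomorphism $f_I: \mathbb{Z}^{\omega}\to I$ such that $f_I[A] = A\cap I$ for every subset $A\subseteq \mathbb{Z}^{\omega}$ that is closed under tail-equivalence.
   Context: $\mathbb{Z}^{\omega}$ is the set of integer sequences with the lexicographic order ($u<v$ iff $u_n<v_n$ at the least $n$ with $u_n\ne v_n$). For a finite nonempty integer sequence $r$ and a sequence $u$, $ru$ is concatenation. $u,v\in\mathbb{Z}^{\omega}$ are tail-equivalent if $u=ru'$ and $v=su'$ for some finite sequences $r,s$ (possibly of different lengths) and some $u'\in\mathbb{Z}^{\omega}$; $A$ is closed under tail-equivalence if it is a union of tail-equivalence classes. An open interval of a linear order is a nonempty convex subset with neither a greatest nor a least element. *)

(* Defs.v *)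
From Stdlib Require Import ZArith List Arith.
Open Scope Z_scope.

Definition Zw := nat -> Z.

Definition lex_lt (u v : Zw) : Prop :=
  exists n : nat, (forall m : nat, (m < n)%nat -> u m = v m) /\ u n < v n.

Definition concat (r : list Z) (u : Zw) : Zw :=
  fun n => if Nat.ltb n (length r) then nth n r 0 else u (n - length r)%nat.

Definition tail_equiv (u v : Zw) : Prop :=
  exists (r s : list Z) (u' : Zw),
    (forall n, u n = concat r u' n) /\ (forall n, v n = concat s u' n).

Definition tail_closed (A : Zw -> Prop) : Prop :=
  forall u v, tail_equiv u v -> A u -> A v.

Definition open_interval (I : Zw -> Prop) : Prop :=
  (exists x, I x) /\
  (forall x y z, I x -> I z -> lex_lt x y -> lex_lt y z -> I y) /\
  (forall x, I x -> exists y, I y /\ lex_lt x y) /\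
  (forall x, I x -> exists y, I y /\ lex_lt y x).

(* Main.v *)
Require Import Defs.
From Stdlib Require Import ZArith List Arith Lia Classical ClassicalEpsilon FunctionalExtensionality.
Open Scope Z_scope.

Lemma least_nat (P : nat -> Prop) : (exists n, P n) -> exists n, P n /\ forall m, (m < n)%nat -> ~ P m.
Proof.
  intros [n Hn]. revert Hn. induction n as [n IH] using (well_founded_induction lt_wf). intros Hn.
  destruct (classic (exists m, (m < n)%nat /\ P m)) as [[m [Hm Pm]]|H].
  - apply (IH m Hm Pm).
  - exists n; split; auto. intros m Hm Pm; apply H; eauto.
Qed.

Lemma lex_irrefl u : ~ lex_lt u u.
Proof. intros [n [_ H]]. lia. Qed.

Lemma lex_trans u v w : lex_lt u v -> lex_lt v w -> lex_lt u w.
Proof.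
  intros [i [Hi Hi']] [j [Hj Hj']].
  destruct (Nat.lt_total i j) as [H|[H|H]].
  - exists i; split. intros m Hm; rewrite Hi by lia; apply Hj; lia. rewrite <- (Hj i H); lia.
  - subst j. exists i; split. intros m Hm; rewrite Hi by lia; apply Hj; lia. lia.
  - exists j; split. intros m Hm; rewrite Hi by lia; apply Hj; lia. rewrite (Hi j H); lia.
Qed.

Lemma lex_asym u v : lex_lt u v -> ~ lex_lt v u.
Proof. intros H1 H2. apply (lex_irrefl u). eapply lex_trans; eauto. Qed.

Lemma lex_tri u v : lex_lt u v \/ u = v \/ lex_lt v u.
Proof.
  destruct (classic (forall n, u n = v n)) as [H|H].
  - right; left; apply functional_extensionality; auto.
  - apply not_all_ex_not in H. apply least_nat in H as [n [Hn Hm]].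
    assert (Ha : forall m, (m < n)%nat -> u m = v m) by (intros m Hm'; apply NNPP; apply Hm; auto).
    destruct (Z.lt_total (u n) (v n)) as [H|[H|H]].
    + left; exists n; auto.
    + contradiction.
    + right; right; exists n; split; auto. intros m Hm'; symmetry; auto.
Qed.

Lemma mono_emb (f : Zw -> Zw) : (forall u v, lex_lt u v -> lex_lt (f u) (f v)) ->
  forall u v, lex_lt u v <-> lex_lt (f u) (f v).
Proof.
  intros Hf u v; split; auto. intros H.
  destruct (lex_tri u v) as [H'|[<-|H']]; auto.
  - exfalso; eapply lex_irrefl; eauto.
  - exfalso; apply (lex_asym _ _ H (Hf _ _ H')).
Qed.

Definition teq (u v : Zw) : Prop := exists i j : nat, forall n, u (i + n)%nat = v (j + n)%nat.

Lemma teq_refl u : teq u u.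
Proof. exists 0%nat, 0%nat; auto. Qed.
Lemma teq_sym u v : teq u v -> teq v u.
Proof. intros [i [j H]]; exists j, i; intros; symmetry; auto. Qed.
Lemma teq_trans u v w : teq u v -> teq v w -> teq u w.
Proof.
  intros [i [j H]] [j' [k H']]. exists (i + j')%nat, (k + j)%nat. intros n.
  replace (i + j' + n)%nat with (i + (j' + n))%nat by lia. rewrite H.
  replace (j + (j' + n))%nat with (j' + (j + n))%nat by lia. rewrite H'. f_equal; lia.
Qed.

Lemma nth_map_seq (y : Zw) n k : (k < n)%nat -> nth k (map y (seq 0 n)) 0 = y k.
Proof.
  intros Hk. rewrite nth_indep with (d' := y 0%nat) by (rewrite length_map, length_seq; auto).
  rewrite map_nth, seq_nth by auto. reflexivity.
Qed.

Lemma teq_tail u v : teq u v -> tail_equiv u v.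
Proof.
  intros [i [j H]]. exists (map u (seq 0 i)), (map v (seq 0 j)), (fun n => u (i + n)%nat).
  split; intros n; unfold Defs.concat; rewrite length_map, length_seq.
  - destruct (Nat.ltb_spec n i). rewrite nth_map_seq; auto. f_equal; lia.
  - destruct (Nat.ltb_spec n j). rewrite nth_map_seq; auto. rewrite H. f_equal; lia.
Qed.

Definition iso (f : Zw -> Zw) (S : Zw -> Prop) :=
  (forall x, S (f x)) /\ (forall y, S y -> exists x, f x = y) /\
  (forall x y, lex_lt x y <-> lex_lt (f x) (f y)) /\ (forall x, teq x (f x)).
Definition good (S : Zw -> Prop) := exists f, iso f S.
Lemma iso_in f S : iso f S -> forall x, S (f x).
Proof. intros H; apply H. Qed.
Lemma iso_lt f S : iso f S -> forall x y, lex_lt x y -> lex_lt (f x) (f y).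
Proof. intros H x y; apply H. Qed.
Lemma iso_teq f S : iso f S -> forall x, teq x (f x).
Proof. intros H; apply H. Qed.

Lemma good_ext (S T : Zw -> Prop) : (forall y, S y <-> T y) -> good S -> good T.
Proof.
  intros E [f [H1 [H2 [H3 H4]]]]. exists f; repeat split; auto.
  - intros x; apply E; auto.
  - intros y Hy; apply H2, E; auto.
  - apply H3.
  - apply H3.
Qed.

Lemma good_all : good (fun _ => True).
Proof.
  exists (fun x => x); repeat split; eauto using teq_refl.
Qed.

Lemma good_image (T S : Zw -> Prop) (e : Zw -> Zw) : good T ->
  (forall u v, lex_lt u v -> lex_lt (e u) (e v)) -> (forall u, teq u (e u)) ->
  (forall y, S y <-> exists x, T x /\ e x = y) -> good S.
Proof.
  intros [f [H1 [H2 [H3 H4]]]] He Ht E. exists (fun x => e (f x)); repeat split.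
  - intros x; apply E; eauto.
  - intros y Hy. apply E in Hy as [x [Tx <-]]. destruct (H2 x Tx) as [x' <-]. eauto.
  - intros H. apply He. apply (proj1 (H3 _ _)). exact H.
  - intros H. apply (proj2 (H3 _ _)). apply (proj2 (mono_emb e He _ _)). exact H.
  - intros x. eapply teq_trans; eauto.
Qed.

Definition neg (u : Zw) : Zw := fun n => - u n.
Lemma neg_neg u : neg (neg u) = u.
Proof. apply functional_extensionality; intros; unfold neg; lia. Qed.
Lemma neg_lt u v : lex_lt u v <-> lex_lt (neg v) (neg u).
Proof.
  unfold neg; split; intros [n [H1 H2]]; exists n; split; try lia.
  - intros m Hm; rewrite H1; auto.
  - intros m Hm; specialize (H1 m Hm); lia.
Qed.
Lemma teq_neg u v : teq u v -> teq (neg u) (neg v).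
Proof. intros [i [j H]]; exists i, j; intros n; unfold neg; rewrite H; auto. Qed.

Lemma good_neg (S : Zw -> Prop) : good S -> good (fun y => S (neg y)).
Proof.
  intros [f [H1 [H2 [H3 H4]]]]. exists (fun x => neg (f (neg x))); repeat split.
  - intros x; cbv beta; rewrite neg_neg; auto.
  - intros y Hy. destruct (H2 _ Hy) as [x Hx]. exists (neg x). rewrite neg_neg, Hx, neg_neg; auto.
  - intros H. rewrite neg_lt in H. rewrite H3 in H. rewrite <- neg_lt. auto.
  - intros H. rewrite <- neg_lt in H. rewrite <- H3 in H. rewrite neg_lt. auto.
  - intros x. rewrite <- (neg_neg x) at 1. apply teq_neg; auto.
Qed.

Definition zcons (a : Z) (x : Zw) : Zw := fun n => match n with O => a | S k => x k end.
Definition ztl (u : Zw) : Zw := fun n => u (S n).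

Lemma zcons_eta u : u = zcons (u 0%nat) (ztl u).
Proof. apply functional_extensionality; intros [|n]; reflexivity. Qed.

Lemma zcons_lt a b x y : lex_lt (zcons a x) (zcons b y) -> a < b \/ (a = b /\ lex_lt x y).
Proof.
  intros [n [H1 H2]]. destruct n as [|n].
  - left; exact H2.
  - right. split. apply (H1 0%nat); lia. exists n; split; auto.
    intros m Hm; apply (H1 (S m)); lia.
Qed.

Lemma teq_ztl u : teq (ztl u) u.
Proof. exists 0%nat, 1%nat; intros n; reflexivity. Qed.

Lemma assemble (J : Z -> Prop) (P : Z -> Zw -> Prop) :
  good (fun u => J (u 0%nat)) -> (forall k, J k -> good (P k)) ->
  (forall k k' x y, J k -> J k' -> k < k' -> P k x -> P k' y -> lex_lt x y) ->
  good (fun y => exists k, J k /\ P k y).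
Proof.
  intros [h [Hh1 [Hh2 [Hh3 Hh4]]]] HP Hord.
  assert (HF : forall k, exists F, J k -> iso F (P k)).
  { intros k. destruct (classic (J k)) as [Hk|Hk].
    - destruct (HP k Hk) as [F HF]; exists F; auto.
    - exists (fun x => x); tauto. }
  apply choice in HF as [F HF].
  assert (Hmono : forall u v, lex_lt u v -> lex_lt (F (h u 0%nat) (ztl (h u))) (F (h v 0%nat) (ztl (h v)))).
  { intros u v Huv. apply Hh3 in Huv. rewrite (zcons_eta (h u)), (zcons_eta (h v)) in Huv.
    apply zcons_lt in Huv as [Hlt|[Heq Hlt]].
    - apply (Hord (h u 0%nat) (h v 0%nat)); auto; apply (iso_in _ _ (HF _ (Hh1 _))).
    - rewrite Heq. eapply iso_lt. apply (HF _ (Hh1 v)). auto. }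
  exists (fun u => F (h u 0%nat) (ztl (h u))); repeat split.
  - intros x. exists (h x 0%nat); split; auto. apply (iso_in _ _ (HF _ (Hh1 x))).
  - intros y [k [Jk Pk]]. destruct (HF k Jk) as [_ [Hs _]]. destruct (Hs y Pk) as [x <-].
    destruct (Hh2 (zcons k x) Jk) as [u Hu]. exists u. rewrite Hu. reflexivity.
  - apply Hmono.
  - apply (proj2 (mono_emb _ Hmono _ _)).
  - intros x. eapply teq_trans. apply Hh4. eapply teq_trans. apply teq_sym, teq_ztl.
    apply (iso_teq _ _ (HF _ (Hh1 x))).
Qed.

Inductive ZE := MInf | Fin (a : Z) | PInf.
Definition ltE (a b : ZE) : Prop :=
  match a, b with
  | MInf, MInf => False | MInf, _ => True
  | Fin x, Fin y => x < y | Fin _, PInf => True | Fin _, MInf => False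
  | PInf, _ => False end.
Definition negE (a : ZE) : ZE := match a with MInf => PInf | PInf => MInf | Fin x => Fin (- x) end.

Lemma ltE_irrefl a : ~ ltE a a.
Proof. destruct a; simpl; lia. Qed.
Lemma ltE_trans a b c : ltE a b -> ltE b c -> ltE a c.
Proof. destruct a, b, c; simpl; auto; lia. Qed.
Lemma negE_negE a : negE (negE a) = a.
Proof. destruct a; simpl; auto. f_equal; lia. Qed.

Definition slabZ (lo hi : ZE) (u : Zw) : Prop := ltE lo (Fin (u 0%nat)) /\ ltE (Fin (u 0%nat)) hi.

Definition sh (c : Z) (u : Zw) : Zw := zcons (u 0%nat + c) (ztl u).

Lemma good_shift (P : Z -> Prop) c : good (fun u => P (u 0%nat)) -> good (fun u => P (u 0%nat - c)).
Proof.
  intros H. apply (good_image _ _ (sh c) H).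
  - intros u v [n [H1 H2]]. destruct n as [|n].
    + exists 0%nat; split; [intros; lia|]. simpl. lia.
    + exists (S n); split.
      * intros [|m] Hm; simpl. rewrite (H1 0%nat) by lia; auto. unfold ztl. apply H1; lia.
      * exact H2.
  - intros u. exists 1%nat, 1%nat. intros n. reflexivity.
  - intros y; split.
    + intros Hy. exists (sh (-c) y). split. simpl. replace (y 0%nat + - c) with (y 0%nat - c) by lia; auto.
      apply functional_extensionality; intros [|n]; simpl; auto. lia.
    + intros [x [Hx <-]]. simpl. replace (x 0%nat + c - c) with (x 0%nat) by lia; auto.
Qed.

Lemma good_negZ (P : Z -> Prop) : good (fun u => P (u 0%nat)) -> good (fun u => P (- u 0%nat)).
Proof. intros H. apply (good_neg _ H). Qed.

Definition Pneg (u : Zw) (m : nat) : Prop := (forall k, (k < m)%nat -> u k = 0) /\ u m < 0.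

Definition gp (u : Zw) : Zw := fun n =>
  if excluded_middle_informative (exists m, (m < n)%nat /\ Pneg u m) then u (pred n)
  else if excluded_middle_informative (Pneg u n) then 0 else u n.

Lemma Pneg_uniq u m m' : Pneg u m -> Pneg u m' -> m = m'.
Proof.
  intros [H1 H2] [H1' H2']. destruct (Nat.lt_total m m') as [H|[H|H]]; auto.
  - specialize (H1' _ H); lia.
  - specialize (H1 _ H); lia.
Qed.

Lemma gp_ins u m n : Pneg u m -> gp u n = if (n <=? m)%nat then 0 else u (pred n).
Proof.
  intros Hm. unfold gp.
  destruct (excluded_middle_informative _) as [[m' [Hm' Pm']]|H1].
  - assert (m' = m) by (eapply Pneg_uniq; eauto). subst. destruct (Nat.leb_spec n m); auto; lia.
  - destruct (excluded_middle_informative _) as [H2|H2].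
    + assert (n = m) by (eapply Pneg_uniq; eauto). subst. rewrite Nat.leb_refl; auto.
    + destruct (Nat.leb_spec n m).
      * assert (n <> m) by (intro; subst; auto). apply (proj1 Hm); lia.
      * exfalso; apply H1; exists m; split; auto.
Qed.

Lemma gp_noins u : (forall m, ~ Pneg u m) -> gp u = u.
Proof.
  intros H. apply functional_extensionality; intros n. unfold gp.
  destruct (excluded_middle_informative _) as [[m' [_ Pm']]|H1]. exfalso; eapply H; eauto.
  destruct (excluded_middle_informative _) as [H2|H2]; auto. exfalso; eapply H; eauto.
Qed.

Lemma gp_0 u : (0 <= u 0%nat -> gp u 0%nat = u 0%nat) /\ (u 0%nat < 0 -> gp u 0%nat = 0).
Proof.
  unfold gp. destruct (excluded_middle_informative _) as [[m' [Hm _]]|H1]. lia.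
  destruct (excluded_middle_informative _) as [H2|H2].
  - split; auto. intros; destruct H2; lia.
  - split; auto. intros Hn. exfalso; apply H2; split; auto. intros; lia.
Qed.

Lemma gp_teq u : teq u (gp u).
Proof.
  destruct (classic (exists m, Pneg u m)) as [[m Hm]|H].
  - exists m, (S m). intros n. rewrite (gp_ins u m) by auto.
    destruct (Nat.leb_spec (S m + n) m). lia. f_equal; lia.
  - rewrite gp_noins. apply teq_refl. intros m Hm; apply H; eauto.
Qed.

Lemma gp_agree u v N : (forall k, (k < N)%nat -> u k = v k) -> forall k, (k < N)%nat -> gp u k = gp v k.
Proof.
  intros H k Hk.
  assert (E : forall m, (m < N)%nat -> (Pneg u m <-> Pneg v m)).
  { intros m Hm; unfold Pneg; split; intros [A B]; split.
    - intros j Hj; rewrite <- H by lia; auto.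
    - rewrite <- H by lia; auto.
    - intros j Hj; rewrite H by lia; auto.
    - rewrite H by lia; auto. }
  unfold gp.
  destruct (excluded_middle_informative (exists m, (m < k)%nat /\ Pneg u m)) as [[m [Hm Pm]]|H1];
  destruct (excluded_middle_informative (exists m, (m < k)%nat /\ Pneg v m)) as [[m' [Hm' Pm']]|H1'].
  - apply H; lia.
  - exfalso; apply H1'; exists m; split; auto; apply E; auto; lia.
  - exfalso; apply H1; exists m'; split; auto; apply E; auto; lia.
  - destruct (excluded_middle_informative (Pneg u k)) as [H2|H2];
    destruct (excluded_middle_informative (Pneg v k)) as [H2'|H2']; auto.
    + exfalso; apply H2'; apply E; auto.
    + exfalso; apply H2; apply E; auto.
Qed.

Lemma gp_mono u v : lex_lt u v -> lex_lt (gp u) (gp v).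
Proof.
  intros [n [Hag Hn]].
  assert (E : forall m, (m < n)%nat -> (Pneg u m <-> Pneg v m)).
  { intros m Hm; unfold Pneg; split; intros [A B]; split.
    - intros j Hj; rewrite <- Hag by lia; auto.
    - rewrite <- Hag by lia; auto.
    - intros j Hj; rewrite Hag by lia; auto.
    - rewrite Hag by lia; auto. }
  destruct (classic (exists m, (m < n)%nat /\ Pneg u m)) as [[m [Hm Pm]]|HB].
  -
    assert (Pv : Pneg v m) by (apply E; auto).
    exists (S n); split.
    + intros k Hk. rewrite (gp_ins u m), (gp_ins v m) by auto.
      destruct (Nat.leb_spec k m); auto. apply Hag; lia.
    + rewrite (gp_ins u m), (gp_ins v m) by auto. destruct (Nat.leb_spec (S n) m). lia. simpl; lia.
  - assert (HBv : ~ exists m, (m < n)%nat /\ Pneg v m).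
    { intros [m [Hm Pm]]; apply HB; exists m; split; auto; apply E; auto. }
    destruct (classic (Pneg u n)) as [Pu|Pu].
    + destruct (Z.lt_trichotomy (v n) 0) as [Hv|[Hv|Hv]].
      * assert (Pv : Pneg v n).
        { split; auto. intros k Hk; rewrite <- Hag by auto; apply Pu; auto. }
        exists (S n); split.
        -- intros k Hk. rewrite (gp_ins u n), (gp_ins v n) by auto.
           destruct (Nat.leb_spec k n); auto; lia.
        -- rewrite (gp_ins u n), (gp_ins v n) by auto. destruct (Nat.leb_spec (S n) n). lia. simpl; lia.
      * exists (S n); split.
        -- intros k Hk. rewrite (gp_ins u n) by auto. destruct (Nat.leb_spec k n); [|lia].
           destruct (classic (exists m, Pneg v m)) as [[m Pm]|Hno].
           ++ rewrite (gp_ins v m) by auto.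
              assert (n < m)%nat.
              { destruct (Nat.lt_total m n) as [Hl|[Hl|Hl]]; auto.
                - exfalso; apply HBv; eauto.
                - subst; destruct Pm; lia. }
              destruct (Nat.leb_spec k m); auto; lia.
           ++ rewrite gp_noins by (intros m Hm; apply Hno; eauto).
              destruct (Nat.eq_dec k n). subst; lia. rewrite <- Hag by lia. symmetry; apply Pu; lia.
        -- rewrite (gp_ins u n) by auto. destruct (Nat.leb_spec (S n) n). lia. simpl.
           destruct (classic (exists m, Pneg v m)) as [[m Pm]|Hno].
           ++ rewrite (gp_ins v m) by auto.
              assert (n < m)%nat.
              { destruct (Nat.lt_total m n) as [Hl|[Hl|Hl]]; auto.
                - exfalso; apply HBv; eauto.
                - subst; destruct Pm; lia. }
              destruct (Nat.leb_spec (S n) m). lia.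
              assert (m = S n) by lia. subst. destruct Pm. lia.
           ++ rewrite gp_noins by (intros m Hm; apply Hno; eauto).
              destruct (Z_lt_le_dec (v (S n)) 0); [|lia].
              exfalso; apply Hno; exists (S n). split; auto. intros k Hk.
              destruct (Nat.eq_dec k n). subst; auto. rewrite <- Hag by lia. apply Pu; lia.
      * rewrite (gp_noins v).
        -- exists n; split.
           ++ intros k Hk. rewrite (gp_ins u n) by auto. destruct (Nat.leb_spec k n); [|lia].
              rewrite <- Hag by auto. symmetry; apply Pu; auto.
           ++ rewrite (gp_ins u n) by auto. rewrite Nat.leb_refl. lia.
        -- intros m Pm. destruct (Nat.lt_total m n) as [Hl|[Hl|Hl]].
           ++ apply HBv; eauto.
           ++ subst; destruct Pm; lia.
           ++ destruct Pm as [Pm _]. specialize (Pm n Hl). lia.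
    + assert (Pv : ~ Pneg v n).
      { intros [A B]. apply Pu. split. intros k Hk; rewrite Hag by auto; auto. lia. }
      exists n; split.
      * intros k Hk. apply (gp_agree u v n); auto.
      * unfold gp.
        destruct (excluded_middle_informative (exists m, (m < n)%nat /\ Pneg u m)); [contradiction|].
        destruct (excluded_middle_informative (exists m, (m < n)%nat /\ Pneg v m)); [contradiction|].
        destruct (excluded_middle_informative (Pneg u n)); [contradiction|].
        destruct (excluded_middle_informative (Pneg v n)); [contradiction|]. auto.
Qed.

Lemma gp_surj y : 0 <= y 0%nat -> exists x, gp x = y /\ x 0%nat <= y 0%nat.
Proof.
  intros Hy.
  destruct (classic (exists m, (forall k, (k <= m)%nat -> y k = 0) /\ y (S m) < 0)) as [[m [H1 H2]]|H].
  - set (x := fun k => if (k <? m)%nat then y k else y (S k)).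
    assert (Px : Pneg x m).
    { split. intros k Hk; unfold x. destruct (Nat.ltb_spec k m); [apply H1; lia|lia].
      unfold x. destruct (Nat.ltb_spec m m); [lia|auto]. }
    exists x; split.
    + apply functional_extensionality; intros n. rewrite (gp_ins x m) by auto.
      destruct (Nat.leb_spec n m). symmetry; apply H1; auto.
      unfold x. destruct (Nat.ltb_spec (pred n) m). lia. f_equal; lia.
    + unfold x. destruct (Nat.ltb_spec 0 m). lia. assert (m = 0%nat) by lia. subst. lia.
  - exists y; split; [|lia]. apply gp_noins. intros [|m] [A B]. lia.
    apply H. exists m; split; auto. intros k Hk; apply A; lia.
Qed.

Lemma good_half hi : ltE (Fin 0) hi -> good (fun u => ltE (Fin (u 0%nat)) hi) ->
  good (fun u => 0 <= u 0%nat /\ ltE (Fin (u 0%nat)) hi).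
Proof.
  intros H0 H. apply (good_image _ _ gp H gp_mono gp_teq).
  intros y; split.
  - intros [Hy1 Hy2]. destruct (gp_surj y Hy1) as [x [<- Hx]]. exists x; split; auto.
    destruct hi; simpl in *; auto; lia.
  - intros [x [Hx <-]]. destruct (gp_0 x) as [A B].
    destruct (Z_lt_le_dec (x 0%nat) 0).
    + rewrite B by auto. split; [lia|auto].
    + rewrite A by auto. split; auto.
Qed.

Lemma good_slab lo hi : (exists a, ltE lo (Fin a) /\ ltE (Fin a) hi) -> good (slabZ lo hi).
Proof.
  intros [a [Ha1 Ha2]].
  assert (Hge : good (fun u => 0 <= u 0%nat)).
  { apply (good_ext (fun u => 0 <= u 0%nat /\ ltE (Fin (u 0%nat)) PInf)).
    intros y; simpl; tauto. apply good_half. simpl; auto.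
    apply (good_ext (fun _ => True)). simpl; tauto. apply good_all. }
  assert (Hlt : forall b, good (fun u => u 0%nat < b)).
  { intros b. pose proof (good_negZ (fun z => 0 <= z - (1 - b)) (good_shift (fun z => 0 <= z) (1 - b) Hge)) as G.
    eapply good_ext; [|exact G]. intros y; cbv beta; lia. }
  destruct lo as [|l|]; destruct hi as [|h|]; simpl in *; try tauto; try lia.
  - apply (good_ext (fun u => u 0%nat < h)). intros; unfold slabZ; simpl; tauto. apply Hlt.
  - apply (good_ext (fun _ => True)). intros; unfold slabZ; simpl; tauto. apply good_all.
  - assert (G1 : good (fun u => 0 <= u 0%nat /\ ltE (Fin (u 0%nat)) (Fin (h - l - 1)))).
    { apply good_half. simpl; lia. simpl. apply Hlt. }
    pose proof (good_shift (fun z => 0 <= z /\ ltE (Fin z) (Fin (h - l - 1))) (l + 1) G1) as G.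
    eapply good_ext; [|exact G]. intros y; unfold slabZ; simpl; lia.
  - pose proof (good_shift (fun z => 0 <= z) (l + 1) Hge) as G.
    eapply good_ext; [|exact G]. intros y; unfold slabZ; simpl; lia.
Qed.

Lemma concat_mono r u v : lex_lt u v -> lex_lt (Defs.concat r u) (Defs.concat r v).
Proof.
  intros [n [H1 H2]]. exists (length r + n)%nat. unfold Defs.concat; split.
  - intros m Hm. destruct (Nat.ltb_spec m (length r)); auto. apply H1; lia.
  - destruct (Nat.ltb_spec (length r + n) (length r)). lia.
    replace (length r + n - length r)%nat with n by lia. auto.
Qed.

Lemma concat_teq r u : teq u (Defs.concat r u).
Proof.
  exists 0%nat, (length r). intros n. unfold Defs.concat.
  destruct (Nat.ltb_spec (length r + n) (length r)). lia. f_equal; lia.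
Qed.

Lemma concat_map y0 n x k : Defs.concat (map y0 (seq 0 n)) x k = if (k <? n)%nat then y0 k else x (k - n)%nat.
Proof.
  unfold Defs.concat. rewrite length_map, length_seq. destruct (Nat.ltb_spec k n); auto.
  apply nth_map_seq; auto.
Qed.

Definition SL (e : nat -> ZE) (n : nat) (lo hi : ZE) (y : Zw) : Prop :=
  (forall k, (k < n)%nat -> e k = Fin (y k)) /\ ltE lo (Fin (y n)) /\ ltE (Fin (y n)) hi.

Lemma SL_good e n lo hi : (exists y, SL e n lo hi y) -> good (SL e n lo hi).
Proof.
  intros [y0 [H0 [H1 H2]]].
  apply (good_image (slabZ lo hi) _ (Defs.concat (map y0 (seq 0 n)))).
  - apply good_slab. eauto.
  - apply concat_mono.
  - apply concat_teq.
  - intros y; split.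
    + intros [A [B C]]. exists (fun k => y (n + k)%nat). split.
      * unfold slabZ. rewrite Nat.add_0_r. auto.
      * apply functional_extensionality; intros k. rewrite concat_map.
        destruct (Nat.ltb_spec k n).
        -- pose proof (H0 k H) as E1; pose proof (A k H) as E2; rewrite E1 in E2; congruence.
        -- f_equal; lia.
    + intros [x [[Hx1 Hx2] <-]]. split; [|split].
      * intros k Hk. rewrite concat_map. destruct (Nat.ltb_spec k n); [auto|lia].
      * rewrite concat_map. destruct (Nat.ltb_spec n n). lia. rewrite Nat.sub_diag; auto.
      * rewrite concat_map. destruct (Nat.ltb_spec n n). lia. rewrite Nat.sub_diag; auto.
Qed.

Definition ylt (y : Zw) (e : nat -> ZE) : Prop :=
  exists n, (forall m, (m < n)%nat -> e m = Fin (y m)) /\ ltE (Fin (y n)) (e n).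
Definition gty (e : nat -> ZE) (y : Zw) : Prop :=
  exists n, (forall m, (m < n)%nat -> e m = Fin (y m)) /\ ltE (e n) (Fin (y n)).

Definition Gpiece (e : nat -> ZE) (m : nat) (y : Zw) : Prop :=
  (forall k, (k < m)%nat -> e k = Fin (y k)) /\ ylt y e.

Lemma U_down e j j' : (exists y, SL e j MInf (e j) y) -> (j' <= j)%nat -> exists y, SL e j' MInf (e j') y.
Proof.
  intros [y [H1 [H2 H3]]] Hj. destruct (Nat.eq_dec j' j). { subst; exists y; split; auto. }
  exists (fun k => if (k =? j')%nat then y k - 1 else y k). split; [|split].
  - intros k Hk. destruct (Nat.eqb_spec k j'). lia. apply H1; lia.
  - simpl; auto.
  - rewrite Nat.eqb_refl. rewrite (H1 j') by lia. simpl; lia.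
Qed.

Lemma Gpiece_good e m : (exists y, Gpiece e m y) -> good (Gpiece e m).
Proof.
  intros [y0 [Hy0 [i [Hi1 Hi2]]]].
  assert (Him : (m <= i)%nat).
  { destruct (Nat.le_gt_cases m i); auto. rewrite (Hy0 i H) in Hi2. simpl in Hi2; lia. }
  assert (Um : exists y, SL e m MInf (e m) y).
  { apply (U_down e i); auto. exists y0; split; [auto|split]; simpl; auto. }
  set (P := fun k : Z => SL e (m + Z.to_nat k)%nat MInf (e (m + Z.to_nat k)%nat)).
  set (J := fun k : Z => 0 <= k /\ exists y, P k y).
  apply (good_ext (fun y => exists k, J k /\ P k y)).
  { intros y; split.
    - intros [k [[Hk _] [A [_ B]]]]. split.
      + intros j Hj; apply A; lia.
      + exists (m + Z.to_nat k)%nat; split; auto.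
    - intros [A [n [B C]]].
      assert (Hmn : (m <= n)%nat).
      { destruct (Nat.le_gt_cases m n); auto. rewrite (A n H) in C. simpl in C; lia. }
      exists (Z.of_nat (n - m)). assert (Hp : P (Z.of_nat (n - m)) y).
      { unfold P. rewrite Nat2Z.id. replace (m + (n - m))%nat with n by lia.
        split; [auto|split]; simpl; auto. }
      split; auto. split; [lia|eauto]. }
  apply assemble.
  - destruct (classic (forall j : nat, exists y, SL e (m + j) MInf (e (m + j)%nat) y)) as [Hall|Hno].
    + apply (good_ext (slabZ (Fin (-1)) PInf)).
      * intros y; unfold slabZ, J, P; simpl; split.
        -- intros [A _]; split; [lia|]. apply Hall.
        -- intros [A _]; split; auto; lia.
      * apply good_slab. exists 0; simpl; split; auto; lia.
    + apply not_all_ex_not in Hno. apply least_nat in Hno as [j0 [Hj0 Hmin]].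
      assert (j0 <> 0%nat) by (intro; subst; rewrite Nat.add_0_r in Hj0; auto).
      apply (good_ext (slabZ (Fin (-1)) (Fin (Z.of_nat j0)))).
      * intros y; unfold slabZ, J, P; simpl; split.
        -- intros [A B]; split; [lia|]. apply NNPP. apply Hmin. lia.
        -- intros [A B]; split; [lia|].
           destruct (Nat.lt_ge_cases (Z.to_nat (y 0%nat)) j0); [lia|].
           exfalso. apply Hj0. apply (U_down e _ _ B). lia.
      * apply good_slab. exists 0; simpl; split; lia.
  - intros k [_ Hk]. apply SL_good; auto.
  - intros k k' x y [Hk _] [Hk' _] Hkk' [A [_ B]] [A' _].
    exists (m + Z.to_nat k)%nat; split.
    + intros j Hj. pose proof (A j Hj) as E1. pose proof (A' j ltac:(lia)) as E2. congruence.
    + rewrite (A' (m + Z.to_nat k)%nat ltac:(lia)) in B. simpl in B; auto.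
Qed.

Definition egood (S : Zw -> Prop) := (forall y, ~ S y) \/ good S.

Lemma egood_ext S T : (forall y, S y <-> T y) -> egood S -> egood T.
Proof.
  intros E [H|H]. left; intros y Hy; apply (H y), E, Hy. right; eapply good_ext; eauto.
Qed.

Lemma egood_union S T : egood S -> egood T -> (forall x y, S x -> T y -> lex_lt x y) ->
  egood (fun y => S y \/ T y).
Proof.
  intros [HS|HS] [HT|HT] Hord.
  - left; intros y [H|H]; [eapply HS|eapply HT]; eauto.
  - right; eapply good_ext; [|exact HT]. intros y; split; auto. intros [H|H]; auto. exfalso; eapply HS; eauto.
  - right; eapply good_ext; [|exact HS]. intros y; split; auto. intros [H|H]; auto. exfalso; eapply HT; eauto.
  - right. apply (good_ext (fun y => exists k, slabZ (Fin (-1)) (Fin 2) (fun _ => k) /\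
                                      (if Z.eqb k 0 then S else T) y)).
    + intros y; unfold slabZ; simpl; split.
      * intros [k [[A B] C]]. destruct (Z.eqb_spec k 0); auto.
      * intros [H|H]; [exists 0|exists 1]; simpl; split; auto; lia.
    + apply (assemble (fun k => slabZ (Fin (-1)) (Fin 2) (fun _ => k))).
      * apply good_slab. exists 0; simpl; lia.
      * intros k _. destruct (Z.eqb k 0); auto.
      * intros k k' x y [A B] [A' B'] Hkk'. simpl in *.
        destruct (Z.eqb_spec k 0); destruct (Z.eqb_spec k' 0); try lia. auto.
Qed.

Lemma max_Z (Q : Z -> Prop) : (exists a, Q a) -> (exists M, forall b, Q b -> b <= M) ->
  exists a, Q a /\ forall b, Q b -> b <= a.
Proof.
  intros [a0 Ha0] [M HM].
  destruct (least_nat (fun k => Q (M - Z.of_nat k))) as [k [Hk Hmin]].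
  { exists (Z.to_nat (M - a0)). rewrite Z2Nat.id by (specialize (HM a0 Ha0); lia).
    replace (M - (M - a0)) with a0 by lia; auto. }
  exists (M - Z.of_nat k); split; auto. intros b Hb.
  destruct (Nat.lt_ge_cases (Z.to_nat (M - b)) k) as [H|H].
  - exfalso. apply (Hmin _ H). rewrite Z2Nat.id by (specialize (HM b Hb); lia).
    replace (M - (M - b)) with b by lia; auto.
  - specialize (HM b Hb). lia.
Qed.

Definition supP (Q : Z -> Prop) (e : ZE) : Prop :=
  (forall a, Q a -> ltE (Fin a) e \/ e = Fin a) /\ (forall a, ltE (Fin a) e -> exists b, Q b /\ a < b).

Lemma supE_ex (Q : Z -> Prop) : exists e, supP Q e.
Proof.
  destruct (classic (exists a, Q a)) as [Hne|Hemp].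
  - destruct (classic (exists M, forall b, Q b -> b <= M)) as [Hb|Hub].
    + destruct (max_Z Q Hne Hb) as [a [Ha Hmax]]. exists (Fin a); split.
      * intros b Hb'. specialize (Hmax b Hb'). simpl. destruct (Z.eq_dec b a). subst; auto. left; lia.
      * intros b Hlt. exists a; split; auto.
    + exists PInf; split. intros; simpl; auto.
      intros a _. apply NNPP; intros Hc. apply Hub. exists a. intros b Hb.
      apply Z.nlt_ge. intros Hlt. apply Hc; eauto.
  - exists MInf; split. intros a Ha; exfalso; eauto. intros a H; simpl in H; contradiction.
Qed.

Definition supE (Q : Z -> Prop) : ZE := proj1_sig (constructive_indefinite_description _ (supE_ex Q)).
Lemma supE_spec Q : supP Q (supE Q).
Proof. unfold supE. apply proj2_sig. Qed.

Definition Qp (D : Zw -> Prop) (p : list Z) (a : Z) : Prop :=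
  exists y, D y /\ (forall k, (k < length p)%nat -> y k = nth k p 0) /\ y (length p) = a.

Fixpoint build (D : Zw -> Prop) (n : nat) : option (list Z) :=
  match n with
  | O => Some nil
  | S n' => match build D n' with
            | Some p => match supE (Qp D p) with Fin a => Some (p ++ a :: nil) | _ => None end
            | None => None end
  end.

Definition sD (D : Zw -> Prop) (n : nat) : ZE :=
  match build D n with Some p => supE (Qp D p) | None => MInf end.

Lemma build_inv D n p : build D n = Some p -> length p = n /\ forall k, (k < n)%nat -> sD D k = Fin (nth k p 0).
Proof.
  revert p; induction n as [|n IH]; intros p Hb.
  - simpl in Hb. inversion Hb; subst. split; auto. intros; lia.
  - simpl in Hb. destruct (build D n) as [p'|] eqn:Hb'; [|discriminate].
    destruct (supE (Qp D p')) as [|a|] eqn:Hs; try discriminate. inversion Hb; subst.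
    destruct (IH p' eq_refl) as [Hl Hk]. split.
    + rewrite length_app; simpl; lia.
    + intros k Hk'. destruct (Nat.lt_ge_cases k n).
      * rewrite app_nth1 by lia. auto.
      * assert (k = n) by lia. subst k. rewrite app_nth2 by lia. rewrite Hl, Nat.sub_diag. simpl.
        unfold sD. rewrite Hb'. auto.
Qed.

Lemma build_agree D n (y : Zw) : (forall k, (k < n)%nat -> sD D k = Fin (y k)) -> build D n = Some (map y (seq 0 n)).
Proof.
  induction n as [|n IH]; intros H; auto.
  simpl. rewrite IH by (intros; apply H; lia).
  assert (E : sD D n = Fin (y n)) by (apply H; lia). unfold sD in E. rewrite IH in E by (intros; apply H; lia).
  rewrite E. change (y 0%nat :: map y (seq 1 n)) with (map y (seq 0 (S n))). rewrite seq_S, map_app. reflexivity.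
Qed.

Lemma Qp_self D (y : Zw) n : D y -> Qp D (map y (seq 0 n)) (y n).
Proof.
  intros Hy. exists y. split; auto. rewrite length_map, length_seq. split; auto.
  intros k Hk. rewrite nth_map_seq; auto.
Qed.

Lemma UB (D : Zw -> Prop) : (forall y z, lex_lt y z -> D z -> D y) -> (forall y, D y -> exists z, D z /\ lex_lt y z) ->
  exists s, forall y, D y <-> ylt y s.
Proof.
  intros Hdown Hnomax. exists (sD D). intros y; split.
  - intros Hy. destruct (classic (forall n, sD D n = Fin (y n))) as [Hall|Hno].
    + exfalso. destruct (Hnomax y Hy) as [z [Hz [n [H1 H2]]]].
      assert (Hb : build D n = Some (map y (seq 0 n))) by (apply build_agree; auto).
      pose proof (Hall n) as E. unfold sD in E. rewrite Hb in E.
      destruct (proj1 (supE_spec (Qp D (map y (seq 0 n)))) (z n)) as [Hl|Hl].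
      { exists z; split; auto. rewrite length_map, length_seq. split; auto.
        intros k Hk. rewrite nth_map_seq by auto. symmetry; auto. }
      * rewrite E in Hl; simpl in Hl; lia.
      * rewrite E in Hl; inversion Hl; lia.
    + apply not_all_ex_not in Hno. apply least_nat in Hno as [n [Hn Hmin]].
      assert (Hag : forall k, (k < n)%nat -> sD D k = Fin (y k)) by (intros k Hk; apply NNPP; auto).
      exists n; split; auto.
      assert (Hb : build D n = Some (map y (seq 0 n))) by (apply build_agree; auto).
      unfold sD in *. rewrite Hb in *.
      pose proof (Qp_self D y n Hy) as Hq.
      destruct (proj1 (supE_spec (Qp D (map y (seq 0 n)))) (y n)) as [Hl|Hl].
      { exact Hq. }
      * auto.
      * congruence.
  - intros [n [H1 H2]].
    assert (Hb : build D n = Some (map y (seq 0 n))) by (apply build_agree; auto).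
    unfold sD in H2. rewrite Hb in H2.
    destruct (proj2 (supE_spec _) _ H2) as [b [[z [Hz [Hz1 Hz2]]] Hlt]].
    rewrite length_map, length_seq in Hz1, Hz2.
    apply (Hdown y z); auto. exists n; split.
    + intros m Hm. rewrite Hz1 by auto. rewrite nth_map_seq; auto.
    + lia.
Qed.

Lemma negE_fin a b : negE a = Fin (- b) <-> a = Fin b.
Proof. destruct a; simpl; split; intros H; try discriminate; inversion H; f_equal; lia. Qed.

Lemma ylt_neg e y : ylt (neg y) e <-> gty (fun k => negE (e k)) y.
Proof.
  unfold ylt, gty, neg. split; intros [n [H1 H2]]; exists n; split.
  - intros m Hm. specialize (H1 m Hm). rewrite H1. simpl. f_equal; lia.
  - destruct (e n); simpl in *; auto; lia.
  - intros m Hm. specialize (H1 m Hm). rewrite <- (negE_negE (e m)), H1. reflexivity.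
  - destruct (e n); simpl in *; auto; lia.
Qed.

Theorem mainTheorem9 :
  forall I : Zw -> Prop, open_interval I ->
  exists f : Zw -> Zw,
    (* f is an order-isomorphism from Z^omega onto I *)
    (forall x, I (f x)) /\
    (forall y, I y -> exists x, f x = y) /\
    (forall x y, lex_lt x y <-> lex_lt (f x) (f y)) /\
    (* f[A] = A ∩ I for every tail-closed A *)
    (forall A : Zw -> Prop, tail_closed A ->
       forall y, (exists x, A x /\ f x = y) <-> (A y /\ I y)).
Proof.
  intros I [[x0 Hx0] [Hconv [Hmax Hmin]]].
  destruct (UB (fun y => exists z, I z /\ lex_lt y z)) as [s Hs].
  { intros y z Hyz [w [Hw Hzw]]. exists w; split; auto. eapply lex_trans; eauto. }
  { intros y [z [Hz Hyz]]. destruct (Hmax z Hz) as [w [Hw Hzw]]. exists z; split; eauto. }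
  destruct (UB (fun y => exists z, I z /\ lex_lt z (neg y))) as [s' Hs'].
  { intros y z Hyz [w [Hw Hzw]]. exists w; split; auto. apply (lex_trans _ (neg z)); auto.
    apply (proj1 (neg_lt y z)); auto. }
  { intros y [z [Hz Hyz]]. destruct (Hmin z Hz) as [w [Hw Hzw]]. exists (neg z); split.
    - exists w; rewrite neg_neg; auto.
    - apply neg_lt. rewrite neg_neg; auto. }
  set (t := fun k => negE (s' k)).
  assert (HI : forall y, I y <-> ylt y s /\ gty t y).
  { intros y. unfold t. rewrite <- ylt_neg, <- Hs, <- Hs'. rewrite neg_neg. split.
    - intros Hy. split; [apply Hmax|apply Hmin]; auto.
    - intros [[z [Hz Hyz]] [w [Hw Hwy]]]. apply (Hconv w y z); auto. }
  clearbody t. clear Hs Hs'.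
  assert (Hn : exists n, (forall k, (k < n)%nat -> t k = Fin (x0 k) /\ s k = Fin (x0 k)) /\ ltE (t n) (s n)).
  { destruct (proj1 (HI x0) Hx0) as [[j [Hj1 Hj2]] [i [Hi1 Hi2]]].
    destruct (Nat.lt_total i j) as [H|[H|H]].
    - exists i; split. intros k Hk; split; [apply Hi1|apply Hj1]; lia. rewrite (Hj1 i H); auto.
    - subst j. exists i; split. intros k Hk; split; auto. eapply ltE_trans; eauto.
    - exists j; split. intros k Hk; split; [apply Hi1|apply Hj1]; lia. rewrite (Hi1 j H); auto. }
  destruct Hn as [n [Hag Hts]].
  assert (Hts' : forall k, (k < n)%nat -> t k = s k).
  { intros k Hk; destruct (Hag k Hk) as [A B]; congruence. }
  set (L := fun y => (forall k, (k < S n)%nat -> t k = Fin (y k)) /\ gty t y).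
  set (M := SL s n (t n) (s n)).
  set (U := Gpiece s (S n)).
  assert (HLMU : forall y, I y <-> ((L y \/ M y) \/ U y)).
  { intros y; rewrite HI; split.
    - intros [[j [Hj1 Hj2]] [i [Hi1 Hi2]]].
      assert (Hin : (n <= i)%nat).
      { destruct (Nat.le_gt_cases n i) as [|Hlt]; auto. exfalso.
        destruct (Nat.lt_total i j) as [H|[H|H]].
        - rewrite (Hts' i Hlt), (Hj1 i H) in Hi2. eapply ltE_irrefl; eauto.
        - subst. rewrite (Hts' j Hlt) in Hi2. eapply ltE_irrefl, ltE_trans; eauto.
        - rewrite <- (Hts' j ltac:(lia)), (Hi1 j H) in Hj2. eapply ltE_irrefl; eauto. }
      assert (Hjn : (n <= j)%nat).
      { destruct (Nat.le_gt_cases n j) as [|Hlt]; auto. exfalso.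
        destruct (Nat.lt_total i j) as [H|[H|H]].
        - rewrite (Hts' i ltac:(lia)), (Hj1 i H) in Hi2. eapply ltE_irrefl; eauto.
        - subst. rewrite (Hts' j Hlt) in Hi2. eapply ltE_irrefl, ltE_trans; eauto.
        - rewrite <- (Hts' j Hlt), (Hi1 j H) in Hj2. eapply ltE_irrefl; eauto. }
      destruct (Nat.eq_dec i n); destruct (Nat.eq_dec j n); subst.
      + left; right. split; [|split]; auto.
      + right. split; [intros k Hk; apply Hj1; lia|]. exists j; auto.
      + left; left. split; [intros k Hk; apply Hi1; lia|]. exists i; auto.
      + exfalso. rewrite (Hi1 n ltac:(lia)), (Hj1 n ltac:(lia)) in Hts. eapply ltE_irrefl; eauto.
    - intros [[[A B]|[A [B C]]]|[A B]].
      + split; auto. exists n; split.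
        * intros m Hm. rewrite <- (Hts' m Hm). apply A; lia.
        * rewrite <- (A n ltac:(lia)). auto.
      + split. exists n; auto. exists n; split; auto. intros m Hm. rewrite Hts'; auto.
      + split; auto. exists n; split.
        * intros m Hm. rewrite Hts'; auto.
        * rewrite (A n ltac:(lia)) in Hts. auto. }
  assert (EL : egood L).
  { destruct (classic (exists y, L y)) as [[y0 Hy0]|Hno]; [right|left; intros y Hy; apply Hno; eauto].
    set (e := fun k => negE (t k)).
    assert (HL : forall y, Gpiece e (S n) (neg y) <-> L y).
    { intros y. unfold Gpiece, L, e. rewrite ylt_neg.
      assert (Ef : (fun k => negE (negE (t k))) = t) by (apply functional_extensionality; intros; apply negE_negE).
      rewrite Ef. split; intros [P Q]; split; auto; intros k Hk; specialize (P k Hk).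
      - apply negE_fin. exact P.
      - apply negE_fin. exact P. }
    eapply good_ext; [intros y; apply HL|]. apply good_neg. apply Gpiece_good.
    exists (neg y0). apply HL. auto. }
  assert (EM : egood M).
  { destruct (classic (exists y, M y)) as [Hy|Hno]; [right; apply SL_good; auto|left; intros y Hy; apply Hno; eauto]. }
  assert (EU : egood U).
  { destruct (classic (exists y, U y)) as [Hy|Hno]; [right; apply Gpiece_good; auto|left; intros y Hy; apply Hno; eauto]. }
  assert (EI : egood I).
  { eapply egood_ext. intros y; symmetry; apply HLMU.
    apply egood_union; [apply egood_union; auto| |].
    - intros x y [A B] [A' [B' C']]. exists n; split.
      + intros m Hm. pose proof (A m ltac:(lia)) as E1. pose proof (A' m Hm) as E2.
        rewrite <- (Hts' m Hm) in E2. congruence.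
      + rewrite (A n ltac:(lia)) in B'. exact B'.
    - auto.
    - intros x y [[A B]|[A B]] [A' B'].
      + exists n; split.
        * intros m Hm. pose proof (A m ltac:(lia)) as E1. pose proof (A' m ltac:(lia)) as E2.
          rewrite (Hts' m Hm) in E1. congruence.
        * rewrite (A n ltac:(lia)), (A' n ltac:(lia)) in Hts. exact Hts.
      + exists n; split.
        * intros m Hm. pose proof (A m Hm) as E1. pose proof (A' m ltac:(lia)) as E2. congruence.
        * rewrite (A' n ltac:(lia)) in B. exact (proj2 B). }
  destruct EI as [Hemp|[f [F1 [F2 [F3 F4]]]]]. { exfalso; eapply Hemp; eauto. }
  exists f. split; [auto|split; [auto|split; [auto|]]].
  intros A HA y; split.
  - intros [x [Ax <-]]. split; auto. apply (HA x (f x)); auto. apply teq_tail; auto.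
  - intros [Ay Iy]. destruct (F2 y Iy) as [x <-]. exists x; split; auto.
    apply (HA (f x) x); auto. apply teq_tail, teq_sym; auto.
Qed.
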